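(* Let $w$ be a $\gamma$-stable instance of MAXCUT and let $w'$ be obtained from $w$ by merging two vertices $u,v$ that lie on the same side of $w$'s maximal cut. Then $w'$ is $\gamma$-stable and its maximal cut is the one induced from $w$'s maximal cut.
   Context: An instance of MAXCUT is a finite vertex set $V$ with a symmetric $w:V\times V\to[0,\infty)$ with zero diagonal. A $\gamma$-perturbation of $w$ is $w'$ with $w(a,b)\le w'(a,b)\le\gamma w(a,b)$ for all $a,b$; $w$ is $\gamma$-stable if some cut is maximal for every $\gamma$-perturbation (for $\gamma>1$ this cut is the unique maximal cut). Merging $u,v\in V$ gives the instance on $V'=(V\setminus\{u,v\})\cup\{v'\}$ with $w'(x,y)=w(x,y)$ for $x,y\in V\setminus\{u,v\}$ and $w'(v',x)=w(v,x)+w(u,x)$. The induced cut places $v'$ on the common side of $u,v$ and every other vertex on its original side. *)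

(* Defs.v *)
From HB Require Import structures.
From mathcomp Require Import all_boot all_order all_algebra.
Set Implicit Arguments. Unset Strict Implicit. Unset Printing Implicit Defensive.
Import Order.TTheory GRing.Theory Num.Theory.
Local Open Scope ring_scope.

Section MaxCut.
Variable R : realFieldType.
Variable V : finType.

Definition maxcut_instance (w : V -> V -> R) : Prop :=
  [/\ forall a b, w a b = w b a, forall a, w a a = 0 & forall a b, 0 <= w a b].

Definition cut_value (w : V -> V -> R) (S : {set V}) : R :=
  \sum_(a in S) \sum_(b in ~: S) w a b.

Definition is_max_cut (w : V -> V -> R) (S : {set V}) : Prop :=
  forall T : {set V}, cut_value w T <= cut_value w S.

Definition perturbation (gamma : R) (w w' : V -> V -> R) : Prop :=
  (forall a b, w' a b = w' b a) /\
  (forall a b, w a b <= w' a b /\ w' a b <= gamma * w a b).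

Definition stable_cut (gamma : R) (w : V -> V -> R) (S : {set V}) : Prop :=
  forall w', perturbation gamma w w' -> is_max_cut w' S.

Definition gamma_stable (gamma : R) (w : V -> V -> R) : Prop :=
  exists S, stable_cut gamma w S.
End MaxCut.

Section Merge.
Variable R : realFieldType.
Variable V : finType.
Variables u v : V.

(* V' = (V \ {u,v}) ∪ {v'} : None is the merged vertex v'. *)
Definition merged_vertex : finType :=
  option {x : V | (x != u) && (x != v)}.

Definition merge_vertices (w : V -> V -> R) : merged_vertex -> merged_vertex -> R :=
  fun a b =>
    match a, b with
    | None, None => 0
    | None, Some y => w v (val y) + w u (val y)
    | Some x, None => w (val x) v + w (val x) u
    | Some x, Some y => w (val x) (val y)
    end.

Definition induced_cut (S : {set V}) : {set merged_vertex} :=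
  [set m : merged_vertex | if m is Some x then val x \in S else v \in S].
End Merge.

Arguments merged_vertex {V} u v.
Arguments merge_vertices {R V} u v w.
Arguments induced_cut {V} u v S.

(* Main.v *)
Require Import Defs.
From HB Require Import structures.
From mathcomp Require Import all_boot all_order all_algebra lra.
Import Order.TTheory GRing.Theory Num.Theory.
Local Open Scope ring_scope.

Section Aux.
Variables (R : realFieldType) (V : finType) (u v : V).
Local Notation V' := (merged_vertex u v).

Definition fm (a : V) : V' := insub a.

Lemma fm_u : fm u = None.
Proof. by rewrite /fm insubN // eqxx. Qed.
Lemma fm_v : fm v = None.
Proof. by rewrite /fm insubN // eqxx andbF. Qed.
Lemma fm_val (x : {x : V | (x != u) && (x != v)}) : fm (val x) = Some x.
Proof. by rewrite /fm valK. Qed.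

Lemma fm_eqSome a x : (fm a == Some x) = (a == val x).
Proof.
rewrite /fm; case: insubP => [y Py <-|nP] /=.
  by [].

apply/esym/negP => /eqP Ha; move: nP; rewrite Ha; case: x {Ha} => /= x -> //.
Qed.

Lemma fm_eqNone a : (fm a == None) = (a == u) || (a == v).
Proof.
rewrite /fm; case: insubP => [y Py Hy|nP] /=.
  by move: Py; rewrite -Hy => /andP[/negbTE -> /negbTE ->].
by move: nP; rewrite negb_and !negbK; case/orP => ->; rewrite ?orbT.
Qed.

Lemma sum_part (G : V -> R) (B : {set V'}) :
  \sum_(a in [set a | fm a \in B]) G a =
  \sum_(a' in B) \sum_(a | fm a == a') G a.
Proof.
rewrite (partition_big fm (mem B)) => [|a]; last by rewrite inE.
apply: eq_bigr => a' Ha'; apply: eq_bigl => a; rewrite inE.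
by case: eqP => [->|]; rewrite ?andbF ?andbT.
Qed.

Lemma sum_None (G : V -> R) : u != v ->
  \sum_(a | fm a == None) G a = G u + G v.
Proof.
move=> uv; rewrite (bigD1 u) ?fm_eqNone ?eqxx //=; congr (_ + _).
apply: big_pred1 => a /=; rewrite fm_eqNone.
case: (a =P v) => [->|_]; first by rewrite orbT eq_sym uv.
by rewrite orbF; case: (a == u).
Qed.

Lemma sum_Some (G : V -> R) x :
  \sum_(a | fm a == Some x) G a = G (val x).
Proof. by apply: big_pred1 => a /=; rewrite fm_eqSome. Qed.

Variables (gamma : R) (w : V -> V -> R) (w2 : V' -> V' -> R).

Definition liftW (a b : V) : R :=
  match fm a, fm b with
  | Some x, Some y => w2 (Some x) (Some y)
  | None, Some y => w a b * w2 None (Some y) / (w v b + w u b)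
  | Some x, None => w a b * w2 (Some x) None / (w a v + w a u)
  | None, None => w a b
  end.

Lemma cut_lift (T : {set V'}) :
  maxcut_instance w -> u != v -> perturbation gamma (merge_vertices u v w) w2 ->
  cut_value w2 T = cut_value liftW [set a | fm a \in T].
Proof.
move=> [wsym w0 wge0] uv [w2sym w2b].
rewrite /cut_value sum_part.
have -> : ~: [set a | fm a \in T] = [set a | fm a \in ~: T].
  by apply/setP => a; rewrite !inE.
under [RHS]eq_bigr => a' _ do under eq_bigr => a _ do rewrite sum_part.
apply: eq_bigr => a' Ha'.
rewrite exchange_big /=; apply: eq_bigr => b' Hb'.
have ne : a' != b' by apply: contraTneq Hb' => <-; rewrite inE negbK.
have key : forall p q d c, 0 <= p -> 0 <= q -> d = p + q -> d <= c ->
    c <= gamma * d -> p * c / d + q * c / d = c.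
  move=> p q d c p0 q0 -> h1 h2.
  have [pq0|pq0] := eqVneq (p + q) 0.
    rewrite pq0 mulr0 in h1 h2; have c0 : c = 0 by apply/eqP; rewrite eq_le h2 h1.
    by rewrite c0 !mulr0 !mul0r addr0.
  by rewrite -mulrDl -mulrDl mulrAC mulfV // mul1r.
case: a' b' Ha' Hb' ne => [x|] [y|] Ha' Hb' ne.
- rewrite !sum_Some /liftW !fm_val //.
- rewrite sum_Some sum_None // /liftW fm_val fm_u fm_v.
  have [h1 h2] := w2b (Some x) None; rewrite /= in h1 h2.
  by rewrite [X in _ = X]key // addrC.
- rewrite sum_None // !sum_Some /liftW fm_val fm_u fm_v.
  have [h1 h2] := w2b None (Some y); rewrite /= in h1 h2.
  by rewrite [X in _ = X]key // addrC.
- by rewrite eqxx in ne.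
Qed.
Lemma bound (p d c : R) : 0 <= p -> p <= d -> d <= c -> c <= gamma * d ->
  p <= p * c / d /\ p * c / d <= gamma * p.
Proof.
move=> p0 pd dc cd.
have [d0|d0] := eqVneq d 0.
  have -> : p = 0 by apply/eqP; rewrite eq_le p0 -d0 pd.
  by rewrite !mul0r mulr0.
have dp : 0 < d by rewrite lt_def d0 (le_trans p0 pd).
rewrite ler_pdivlMr // ler_pdivrMr //; split; nra.
Qed.

Lemma fm_Some {a x} : fm a = Some x -> a = val x.
Proof. by move/eqP; rewrite fm_eqSome => /eqP. Qed.
Lemma fm_None {a} : fm a = None -> (a = u) \/ (a = v).
Proof. by move/eqP; rewrite fm_eqNone => /orP[] /eqP; [left|right]. Qed.

Lemma lift_pert : 1 <= gamma -> maxcut_instance w ->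
  perturbation gamma (merge_vertices u v w) w2 -> perturbation gamma w liftW.
Proof.
move=> g1 [wsym w0 wge0] [w2sym w2b]; split.
  move=> a b; rewrite /liftW.
  case: (fm a) => [x|]; case: (fm b) => [y|] //.
  - by rewrite (wsym a b) (w2sym (Some x)) (wsym v a) (wsym u a).
  - by rewrite (wsym a b) (w2sym None) (wsym v b) (wsym u b).
move=> a b; rewrite /liftW.
case Ea: (fm a) => [x|]; case Eb: (fm b) => [y|].
- by rewrite (fm_Some Ea) (fm_Some Eb); apply: (w2b (Some x) (Some y)).
- have [h1 h2] := w2b (Some x) None; rewrite /= -(fm_Some Ea) in h1 h2.
  apply: bound => //.
  by have := wge0 a v; have := wge0 a u; case: (fm_None Eb) => ->; lra.
- have [h1 h2] := w2b None (Some y); rewrite /= -(fm_Some Eb) in h1 h2.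
  apply: bound => //.
  by have := wge0 v b; have := wge0 u b; case: (fm_None Ea) => ->; lra.
- by split => //; apply: ler_peMl.
Qed.

End Aux.
Arguments fm {V} u v a.
Arguments fm_Some {V u v a x}.
Arguments fm_None {V u v a}.
Arguments lift_pert {R V u v gamma w w2}.
Arguments cut_lift {R V u v gamma w w2} T.

Lemma lift_induced (V : finType) (u v : V) (S : {set V}) :
  (u \in S) = (v \in S) ->
  [set a | fm u v a \in induced_cut u v S] = S.
Proof.
move=> huv; apply/setP => a; rewrite !inE.
case Ea: (fm u v a) => [x|] /=; first by rewrite (fm_Some Ea).
by case: (fm_None Ea) => ->.
Qed.

Theorem mainTheorem11 (R : realFieldType) (V : finType) (gamma : R)
    (w : V -> V -> R) (u v : V) (S : {set V}) :
  maxcut_instance w ->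
  u != v ->
  stable_cut gamma w S ->
  (u \in S) = (v \in S) ->
  gamma_stable gamma (merge_vertices u v w) /\
  stable_cut gamma (merge_vertices u v w) (induced_cut u v S).
Proof.
move=> wi uv st huv.
suff H : stable_cut gamma (merge_vertices u v w) (induced_cut u v S).
  by split => //; exists (induced_cut u v S).
move=> w2 hp T.
have [g1|g1] := lerP 1 gamma.
  rewrite (cut_lift T wi uv hp) (cut_lift (induced_cut u v S) wi uv hp).
  rewrite lift_induced //.
  exact: (st _ (lift_pert g1 wi hp)).
have z : forall a b, w2 a b = 0.
  move=> a b; have [h1 h2] := hp.2 a b.
  have m0 : 0 <= merge_vertices u v w a b.
    case: wi => _ _ wge0.
    by case: a b {h1 h2} => [x|] [y|] //=; rewrite addr_ge0.
  have : merge_vertices u v w a b = 0.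
    apply/eqP; rewrite eq_le m0 andbT.
    have := le_trans h1 h2; nra.
  by move=> e; rewrite e mulr0 in h2; rewrite e in h1; apply/eqP; rewrite eq_le h1 h2.
by rewrite /cut_value !big1 // => a _; rewrite big1 // => b _; rewrite z.
Qed.
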